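(* For any two policy profiles $\pi,\pi'$ and every player $i$, $$\|v_i(\pi)-v_i(\pi')\|\le\frac{3\sqrt{A_i}}{\zeta^3}\sum_{j\in\mathcal N}\sqrt{A_j}\,\|\pi_j-\pi'_j\|,$$ and consequently $\|v(\pi)-v(\pi')\|\le\frac{3A}{\zeta^3}\|\pi-\pi'\|$ with $A=\sum_{i\in\mathcal N}A_i$.
   Context: Standing setting. Finite $N$-player stochastic game with random stopping: players $\mathcal N$, finite states $\mathcal S$, finite action sets $\mathcal A_i$ with $A_i=|\mathcal A_i|$, $\mathcal A=\prod_i\mathcal A_i$, rewards $r_i:\mathcal S\times\mathcal A\to[-1,1]$, nonnegative transition weights $P(s'\mid s,a)$ with stopping probability $\zeta_{s,a}=1-\sum_{s'}P(s'\mid s,a)$, $\zeta=\min_{s,a}\zeta_{s,a}>0$, initial distribution $\rho$. Policies $\pi_i\in\Delta(\mathcal A_i)^{\mathcal S}\subset\mathbb R^{\mathcal S\times\mathcal A_i}$, Euclidean norms. Episodes: $s_0\sim\rho$; players independently draw $a_{i,t}\sim\pi_i(\cdot\mid s_t)$; stop w.p. $\zeta_{s_t,a_t}$ ($T(\tau)=t$), else move to $s'$ w.p. $P(s'\mid s_t,a_t)$. $V_{i,\rho}(\pi)=\mathbb E_\pi[\sum_{t=0}^{T(\tau)}r_i(s_t,a_t)]$, $v_i(\pi)=\nabla_{\pi_i}V_{i,\rho}(\pi)$ (gradient in player $i$'s own entries), $v=(v_i)_i$. *)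

(* Defs.v *)
From HB Require Import structures.
From mathcomp Require Import all_boot all_order all_algebra.
From mathcomp Require Import all_classical all_reals all_analysis.
Set Implicit Arguments. Unset Strict Implicit. Unset Printing Implicit Defensive.
Import Order.TTheory GRing.Theory Num.Theory numFieldNormedType.Exports.
Local Open Scope ring_scope.

(* Players: a finite type I.  States: a finite type S.
   Action set of player i: 'I_(Ai i), so A_i = |A_i| = Ai i.
   Joint actions: dependent finite functions. *)
Definition joint (I : finType) (Ai : I -> nat) : finType :=
  {dffun forall i : I, 'I_(Ai i)}.

(* A (policy) profile: for each player i a real vector indexed by S x A_i,
   i.e. pi i s b = pi_i(b | s).  Defined on the whole ambient space. *)
Definition profile (R : realType) (I S : finType) (Ai : I -> nat) :=
  forall i : I, S -> 'I_(Ai i) -> R.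

Definition is_policy (R : realType) (I S : finType) (Ai : I -> nat)
  (pi : profile R S Ai) : Prop :=
  (forall i s b, 0 <= pi i s b) /\ (forall i s, \sum_(b < Ai i) pi i s b = 1).

Definition jprob (R : realType) (I S : finType) (Ai : I -> nat)
  (pi : profile R S Ai) (s : S) (a : joint Ai) : R :=
  \prod_(i : I) pi i s (a i).

(* d_{t+1}(s') = sum_s d_t(s) sum_a pi(a|s) P(s'|s,a): the (sub-probability)
   law of s_{t+1} on the event that the episode has not stopped by time t. *)
Definition dist_step (R : realType) (I S : finType) (Ai : I -> nat)
  (P : S -> joint Ai -> S -> R) (pi : profile R S Ai) (d : S -> R) : S -> R :=
  fun s' => \sum_(s : S) d s * \sum_(a : joint Ai) jprob pi s a * P s a s'.

Definition state_dist (R : realType) (I S : finType) (Ai : I -> nat)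
  (rho : S -> R) (P : S -> joint Ai -> S -> R) (pi : profile R S Ai) (t : nat)
  : S -> R := iter t (dist_step P pi) rho.

(* E_pi[ r(s_t,a_t) 1{T(tau) >= t} ] *)
Definition step_reward (R : realType) (I S : finType) (Ai : I -> nat)
  (r : S -> joint Ai -> R) (rho : S -> R) (P : S -> joint Ai -> S -> R)
  (pi : profile R S Ai) (t : nat) : R :=
  \sum_(s : S) state_dist rho P pi t s * \sum_(a : joint Ai) jprob pi s a * r s a.

(* V_{i,rho}(pi) = E_pi[ sum_{t=0}^{T(tau)} r_i(s_t,a_t) ] = sum_t step_reward *)
Definition value (R : realType) (I S : finType) (Ai : I -> nat)
  (r : S -> joint Ai -> R) (rho : S -> R) (P : S -> joint Ai -> S -> R)
  (pi : profile R S Ai) : R :=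
  limn (@series R (step_reward r rho P pi)).

Definition pert (R : realType) (I S : finType) (Ai : I -> nat)
  (pi : profile R S Ai) (i : I) (s : S) (a : 'I_(Ai i)) (t : R) : profile R S Ai :=
  fun j s' b => pi j s' b + (if [&& j == i, s' == s & val b == val a] then t else 0).

Definition grad (R : realType) (I S : finType) (Ai : I -> nat)
  (r : I -> S -> joint Ai -> R) (rho : S -> R) (P : S -> joint Ai -> S -> R)
  (pi : profile R S Ai) (i : I) : S -> 'I_(Ai i) -> R :=
  fun s a => derive1 (fun t => value (r i) rho P (pert pi s a t)) 0.

Definition enorm (R : realType) (S : finType) (n : nat) (f : S -> 'I_n -> R) : R :=
  Num.sqrt (\sum_(s : S) \sum_(b < n) f s b ^+ 2).

Definition prof_norm (R : realType) (I S : finType) (Ai : I -> nat)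
  (f : profile R S Ai) : R :=
  Num.sqrt (\sum_(i : I) \sum_(s : S) \sum_(b < Ai i) f i s b ^+ 2).

(* zeta = min_{s,a} zeta_{s,a},  zeta_{s,a} = 1 - sum_{s'} P(s'|s,a)
   (the identity 1 of the min is harmless since every zeta_{s,a} <= 1). *)
Definition zeta (R : realType) (I S : finType) (Ai : I -> nat)
  (P : S -> joint Ai -> S -> R) : R :=
  \big[Num.min/1]_(s : S) \big[Num.min/1]_(a : joint Ai) (1 - \sum_(s' : S) P s a s').

Arguments grad {R I S Ai} r rho P pi i _ _.
Arguments enorm {R S n} f.
Arguments prof_norm {R I S Ai} f.

(* Main.v *)
Require Import Defs.
From HB Require Import structures.
From mathcomp Require Import all_boot all_order all_algebra.
From mathcomp Require Import all_classical all_reals all_analysis.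
From mathcomp Require Import ring lra.
Import Order.TTheory GRing.Theory Num.Theory numFieldNormedType.Exports.
Local Open Scope ring_scope.

Module Aux.
Set Implicit Arguments. Unset Strict Implicit. Unset Printing Implicit Defensive.
Lemma sum_prod_joint (R : realType) (I : finType) (Ai : I -> nat)
  (f : forall i : I, 'I_(Ai i) -> R) :
  \sum_(a : joint Ai) \prod_(i : I) f i (a i) = \prod_(i : I) \sum_(c < Ai i) f i (c).
Proof.
pose T_ : I -> finType := fun i => 'I_(Ai i).
transitivity (\sum_(t : fprod T_) \prod_(i : I) f i (t i)).
  rewrite (reindex (@dffun_of_fprod I T_)); last first.
    exact/onW_bij/dffun_of_fprod_bij.
  apply: eq_bigr => t _; apply: eq_bigr => i _.
  by rewrite /dffun_of_fprod ffunE.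
pose P_ := fun i => [ffun c : T_ i => f i c].
transitivity (\sum_(t : fprod T_) \prod_(i in I) P_ i (t i)).
  by apply: eq_bigr => t _; apply: eq_bigr => i _; rewrite ffunE.
rewrite (@big_fprod R 0 1 *%R +%R I T_ P_).
rewrite -(@bigA_distr_big_dep R 0 1 *%R +%R I {i : I & T_ i} (tagged_with T_) (fun i j => untag 0 (P_ i) j)).
apply: eq_bigr => i _.
transitivity (\sum_(c : T_ i) P_ i c); last by apply: eq_bigr => c _; rewrite ffunE.
by rewrite (@big_tag R 0 +%R I T_ (fun i c => P_ i c) i).
Qed.


Section ProdDiff.
Variables (R : realType) (I : finType) (Ai : I -> nat).

Lemma prod_diff_l1 (x y : forall i, 'I_(Ai i) -> R) :
  (forall i, \sum_c `|x i c| <= 1) -> (forall i, \sum_c `|y i c| <= 1) ->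
  \sum_(a : joint Ai) `|\prod_i x i (a i) - \prod_i y i (a i)| <=
  \sum_i \sum_c `|x i c - y i c|.
Proof.
move=> hx hy.
pose z (l : seq I) i c := if i \in l then x i c else y i c.
have hz : forall l i, \sum_c `|z l i c| <= 1.
  by move=> l i; rewrite /z; case: (i \in l).
suff H : forall l, \sum_(a : joint Ai) `|\prod_i z l i (a i) - \prod_i y i (a i)| <=
    \sum_(i <- l) \sum_c `|x i c - y i c|.
  have E0 : forall a : joint Ai, \prod_i x i (a i) = \prod_i z (index_enum I) i (a i).
    by move=> a; apply: eq_bigr => i _; rewrite /z mem_index_enum.
  under eq_bigr do rewrite E0.
  exact: H.
elim=> [|k l IH].
  rewrite big_nil; apply: le_trans (lexx _); rewrite big1 // => a _.
  have -> : \prod_i z [::] i (a i) = \prod_i y i (a i) by [].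
  by rewrite subrr normr0.
rewrite big_cons.
apply: (@le_trans _ _ (\sum_(a : joint Ai) (`|\prod_i z (k :: l) i (a i) - \prod_i z l i (a i)|
      + `|\prod_i z l i (a i) - \prod_i y i (a i)|))).
  by apply: ler_sum => a _; rewrite -[X in `|X|](subrKA (\prod_i z l i (a i))); apply: ler_normD.
rewrite big_split /=; apply: lerD => //.
case kl : (k \in l).
  apply: (@le_trans _ _ 0); last by apply: sumr_ge0 => c _.
  rewrite le_eqVlt; apply/orP; left; apply/eqP; apply: big1 => a _.
  have -> : \prod_i z (k :: l) i (a i) = \prod_i z l i (a i).
    apply: eq_bigr => i _; rewrite /z in_cons.
    by case: eqP => [->|]; rewrite ?kl.
  by rewrite subrr normr0.
pose h i (c : 'I_(Ai i)) := if i == k then `|x i c - y i c| else `|z l i c|.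
have E : forall a : joint Ai, `|\prod_i z (k :: l) i (a i) - \prod_i z l i (a i)| =
    \prod_i h i (a i).
  move=> a; rewrite (bigD1 k) //= [X in _ - X](bigD1 k) //= [RHS](bigD1 k) //=.
  have E1 : \prod_(i | i != k) z (k :: l) i (a i) = \prod_(i | i != k) z l i (a i).
    by apply: eq_bigr => i /negbTE hi; rewrite /z in_cons hi.
  have E2 : \prod_(i | i != k) h i (a i) = \prod_(i | i != k) `|z l i (a i)|.
    by apply: eq_bigr => i /negbTE hi; rewrite /h hi.
  rewrite E1 E2 -mulrBl normrM normr_prod /h eqxx /z in_cons eqxx kl /=.
  by [].
under eq_bigr do rewrite E.
rewrite (sum_prod_joint h) (bigD1 k) //=.
have Hk : \sum_c h k c = \sum_c `|x k c - y k c| by apply: eq_bigr => c _; rewrite /h eqxx.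
rewrite Hk -[X in _ <= X]mulr1; apply: ler_wpM2l; first by apply: sumr_ge0.
apply: prodr_ile1 => i /negbTE hi; rewrite /h hi; apply/andP; split.
  by apply: sumr_ge0.
exact: hz.
Qed.

End ProdDiff.


Section Real.
Variable (R : realType).

Lemma sq_le (x y : R) : `|x| <= y -> x ^+ 2 <= y ^+ 2.
Proof.
move=> h; rewrite -(real_normK (num_real x)).
have h0 : 0 <= `|x| by [].
by rewrite !expr2; apply: ler_pM.
Qed.

Lemma le_sum_nonneg (T : finType) (f : T -> R) t0 : (forall t, 0 <= f t) -> f t0 <= \sum_t f t.
Proof. by move=> h; rewrite (bigD1 t0) //= lerDl sumr_ge0. Qed.

Lemma sumsq_le (T : finType) (m : T -> R) : (forall t, 0 <= m t) ->
  \sum_t m t ^+ 2 <= (\sum_t m t) ^+ 2.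
Proof.
move=> h; rewrite expr2 mulr_suml; apply: ler_sum => t _.
by rewrite expr2; apply: ler_wpM2l => //; apply: le_sum_nonneg.
Qed.

Lemma cs (T : finType) (a b : T -> R) :
  (\sum_t a t * b t) ^+ 2 <= (\sum_t a t ^+ 2) * (\sum_t b t ^+ 2).
Proof.
have H : 0 <= \sum_i \sum_j (a i * b j - a j * b i) ^+ 2.
  by apply: sumr_ge0 => i _; apply: sumr_ge0 => j _; apply: sqr_ge0.
have E : \sum_i \sum_j (a i * b j - a j * b i) ^+ 2 =
   2 * ((\sum_t a t ^+ 2) * (\sum_t b t ^+ 2)) - 2 * (\sum_t a t * b t) ^+ 2.
  have E1 : (\sum_t a t ^+ 2) * (\sum_t b t ^+ 2) = \sum_i \sum_j a i ^+ 2 * b j ^+ 2.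
    by rewrite mulr_suml; apply: eq_bigr => i _; rewrite mulr_sumr.
  have E2 : (\sum_t a t * b t) ^+ 2 = \sum_i \sum_j (a i * b i) * (a j * b j).
    by rewrite expr2 mulr_suml; apply: eq_bigr => i _; rewrite mulr_sumr.
  have E3 : \sum_i \sum_j a j ^+ 2 * b i ^+ 2 = \sum_i \sum_j a i ^+ 2 * b j ^+ 2.
    by rewrite exchange_big.
  rewrite E1 E2.
  transitivity (\sum_i \sum_j (a i ^+ 2 * b j ^+ 2 + a j ^+ 2 * b i ^+ 2
     - 2 * ((a i * b i) * (a j * b j)))).
    by apply: eq_bigr => i _; apply: eq_bigr => j _; ring.
  transitivity (\sum_i \sum_j a i ^+ 2 * b j ^+ 2 + \sum_i \sum_j a j ^+ 2 * b i ^+ 2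
     - 2 * \sum_i \sum_j (a i * b i) * (a j * b j)).
    rewrite mulr_sumr -big_split /= -sumrB; apply: eq_bigr => i _.
    by rewrite mulr_sumr -big_split /= -sumrB.
  rewrite E3; ring.
rewrite E in H; lra.
Qed.

Lemma l1_l2 n (v : 'I_n -> R) : \sum_c `|v c| <= Num.sqrt n%:R * Num.sqrt (\sum_c v c ^+ 2).
Proof.
have := cs (fun _ : 'I_n => 1) (fun c => `|v c|).
under eq_bigr do rewrite mul1r.
under [X in _ <= X * _]eq_bigr do rewrite expr1n.
under [X in _ <= _ * X]eq_bigr do rewrite (real_normK (num_real _)).
rewrite sumr_const card_ord => H.
rewrite -sqrtrM ?ler0n //.
have h0 : 0 <= \sum_c `|v c| by apply: sumr_ge0.
rewrite -(ger0_norm h0) -sqrtr_sqr ler_sqrt //.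
  by apply: mulr_ge0 => //; apply: sumr_ge0 => c _; apply: sqr_ge0.
Qed.

End Real.

Section Markov.
Variables (R : realType) (S : finType).
Local Open Scope classical_set_scope.

Lemma cvg_bigsum (J : Type) (r : seq J) (F : J -> nat -> R) (l : J -> R) :
  (forall j, F j @ \oo --> l j) ->
  (fun n => \sum_(j <- r) F j n) @ \oo --> \sum_(j <- r) l j.
Proof.
move=> cF; elim: r => [|j r IH].
  under eq_fun do rewrite big_nil. rewrite big_nil; exact: cvg_cst.
under eq_fun do rewrite big_cons. rewrite big_cons.
by apply: cvgD => //; exact: cF.
Qed.

Lemma geo_cvg (u : nat -> R) (B q : R) : 0 <= q < 1 ->
  (forall n, `|u n| <= B * q ^+ n) -> cvgn (series u).
Proof.
move=> /andP[q0 q1] hu.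
have B0 : 0 <= B by have := hu 0%N; rewrite expr0 mulr1; apply: le_trans.
apply: normed_cvg.
apply: (@series_le_cvg _ _ (geometric B q)).
- by move=> n /=.
- by move=> n; apply: geometric_ge0.
- by move=> n /=; apply: hu.
- by apply: is_cvg_geometric_series; rewrite ger0_norm.
Qed.

Definition stepK (K : S -> S -> R) (d : S -> R) : S -> R :=
  fun s' => \sum_(s : S) d s * K s s'.

Definition occ K (x : S -> R) s := limn (series (fun t => iter t (stepK K) x s)).

Definition geo_bd K (x : S -> R) := exists B q, 0 <= q < 1 /\
  forall t s, `|iter t (stepK K) x s| <= B * q ^+ t.

Lemma occ_cvg K x : geo_bd K x -> forall s, cvgn (series (fun t => iter t (stepK K) x s)).
Proof. by move=> [B [q [hq hb]]] s; apply: (geo_cvg hq) => n; apply: hb. Qed.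

Lemma occ_fix K x : geo_bd K x ->
  forall s', occ K x s' = x s' + \sum_s occ K x s * K s s'.
Proof.
move=> hg s'.
have cv := occ_cvg hg.
have h1 : (fun n => series (fun t => iter t (stepK K) x s') n.+1) @ \oo -->
   x s' + \sum_s occ K x s * K s s'.
  have -> : (fun n => series (fun t => iter t (stepK K) x s') n.+1) =
     (fun n => x s' + \sum_s series (fun t => iter t (stepK K) x s) n * K s s').
    apply/funext => n; rewrite /series /= big_nat_recl //=; congr (_ + _).
    rewrite exchange_big /=; apply: eq_bigr => s _.
    by rewrite big_distrl.
  apply: cvgD; first exact: cvg_cst.
  apply: (@cvg_bigsum S (index_enum S) (fun s n => series (fun t => iter t (stepK K) x s) n * K s s')).
  by move=> s; apply: cvgMl; apply: cv.
rewrite /occ; apply: cvg_lim => //.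
by rewrite -(cvg_shiftS (series _)).
Qed.

Lemma occ_val K x (c : S -> R) : geo_bd K x ->
  limn (series (fun t => \sum_s iter t (stepK K) x s * c s)) = \sum_s occ K x s * c s.
Proof.
move=> hg; have cv := occ_cvg hg.
apply: cvg_lim => //.
have -> : series (fun t => \sum_s iter t (stepK K) x s * c s) =
  (fun n => \sum_s series (fun t => iter t (stepK K) x s) n * c s).
  apply/funext => n; rewrite /series /= exchange_big /=; apply: eq_bigr => s _.
  by rewrite big_distrl.
apply: (@cvg_bigsum S (index_enum S) (fun s n => series (fun t => iter t (stepK K) x s) n * c s)).
by move=> s; apply: cvgMl; apply: cv.
Qed.


Lemma norm_le_sum (f : S -> R) s : `|f s| <= \sum_s' `|f s'|.
Proof. by rewrite (bigD1 s) //= lerDl sumr_ge0. Qed.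

Lemma l1_step K q d : (forall s, \sum_s' `|K s s'| <= q) ->
  \sum_s' `|stepK K d s'| <= q * \sum_s `|d s|.
Proof.
move=> hK.
apply: (@le_trans _ _ (\sum_s' \sum_s `|d s| * `|K s s'|)).
  apply: ler_sum => s' _; rewrite /stepK; apply: (le_trans (ler_norm_sum _ _ _)).
  by apply: ler_sum => s _; rewrite normrM.
rewrite exchange_big /= mulr_sumr; apply: ler_sum => s _.
by rewrite -mulr_sumr mulrC; apply: ler_wpM2r => //; apply: hK.
Qed.

Lemma geo_l1 K q x : 0 <= q < 1 -> (forall s, \sum_s' `|K s s'| <= q) -> geo_bd K x.
Proof.
move=> hq hK; exists (\sum_s `|x s|), q; split => // t s.
apply: (le_trans (norm_le_sum _ s)).
elim: t => [|t IH]; first by rewrite expr0 mulr1.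
rewrite iterS; apply: (le_trans (l1_step _ hK)).
case/andP: hq => q0 _.
by rewrite exprS mulrCA; apply: ler_wpM2l.
Qed.

Definition trK (K : S -> S -> R) : S -> S -> R := fun s' s => K s s'.

Lemma sup_step K q u b : (forall s, \sum_s' `|K s s'| <= q) -> 0 <= b ->
  (forall s, `|u s| <= b) -> forall s, `|stepK (trK K) u s| <= q * b.
Proof.
move=> hK b0 hu s; rewrite /stepK /trK.
apply: (le_trans (ler_norm_sum _ _ _)).
apply: (@le_trans _ _ (\sum_s' b * `|K s s'|)).
  by apply: ler_sum => s' _; rewrite normrM; apply: ler_wpM2r.
by rewrite -mulr_sumr mulrC; apply: ler_wpM2r => //; apply: hK.
Qed.

Lemma geo_sup K q x : 0 <= q < 1 -> (forall s, \sum_s' `|K s s'| <= q) ->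
  geo_bd (trK K) x.
Proof.
move=> hq hK; exists (\sum_s `|x s|), q; split => // t.
case/andP: hq => q0 _.
elim: t => [|t IH] s; first by rewrite expr0 mulr1 /=; apply: norm_le_sum.
rewrite iterS exprS mulrCA; apply: (sup_step hK) => //.
by apply: mulr_ge0 => //; [apply: sumr_ge0 => ? _ | apply: exprn_ge0].
Qed.

Lemma fix_l1 K q (y z : S -> R) : q <= 1 -> (forall s, \sum_s' `|K s s'| <= q) ->
  (forall s', y s' = z s' + \sum_s y s * K s s') ->
  (1 - q) * \sum_s `|y s| <= \sum_s `|z s|.
Proof.
move=> q1 hK hy.
have : \sum_s `|y s| <= \sum_s `|z s| + q * \sum_s `|y s|.
  apply: (@le_trans _ _ (\sum_s `|z s| + \sum_s' `|stepK K y s'|)); last first.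
    by rewrite lerD2l; apply: l1_step.
  rewrite -big_split /=; apply: ler_sum => s _; rewrite hy; apply: ler_normD.
by rewrite mulrBl mul1r; lra.
Qed.

Lemma fix_sup K q (y z : S -> R) b : q <= 1 -> (forall s, \sum_s' `|K s s'| <= q) ->
  (forall s, y s = z s + \sum_s' y s' * K s s') ->
  (forall s, `|z s| <= b) -> forall s, (1 - q) * `|y s| <= b.
Proof.
move=> q1 hK hy hz s0.
have b0 : 0 <= b by apply: le_trans (hz s0).
set m := \big[Order.max/0]_s `|y s|.
have hm : forall s, `|y s| <= m by move=> s; apply: le_bigmax.
have m0 : 0 <= m by apply: le_trans (hm s0).
have hs : forall s, `|y s| <= b + q * m.
  move=> s; rewrite hy; apply: (le_trans (ler_normD _ _)); apply: lerD => //.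
  by apply: (sup_step hK m0 hm s).
have q0 : 0 <= q by apply: le_trans (hK s0); apply: sumr_ge0.
have : m <= b + q * m.
  apply: bigmax_le; first by apply: addr_ge0 => //; apply: mulr_ge0.
  by move=> s _; apply: hs.
move=> H.
apply: (@le_trans _ _ ((1 - q) * m)); first by apply: ler_wpM2l; rewrite ?subr_ge0.
by rewrite mulrBl mul1r; lra.
Qed.

Lemma occ_tele K x (y : S -> R) : geo_bd K x ->
  \sum_s occ K x s * (y s - \sum_s' K s s' * y s') = \sum_s x s * y s.
Proof.
move=> hg.
have H : \sum_s occ K x s * y s =
  \sum_s x s * y s + \sum_s occ K x s * \sum_s' K s s' * y s'.
  under eq_bigr do rewrite (occ_fix hg).
  under eq_bigr do rewrite mulrDl.
  rewrite big_split /=; congr (_ + _).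
  under eq_bigr do rewrite mulr_suml.
  rewrite exchange_big /=; apply: eq_bigr => s _; rewrite mulr_sumr.
  by apply: eq_bigr => s' _; rewrite mulrA.
under eq_bigr do rewrite mulrBr.
by rewrite sumrB H addrK.
Qed.

End Markov.

Section Game.
Variables (R : realType) (I S : finType) (Ai : I -> nat).
Variable (P : S -> joint Ai -> S -> R).
Hypothesis hP : forall s a s', 0 <= P s a s'.

Local Notation zt := (zeta P).

Lemma zeta_le1 : zt <= 1.
Proof. exact: bigmin_le_id. Qed.

Lemma zeta_P s a : \sum_s' P s a s' <= 1 - zt.
Proof.
rewrite /zeta.
have h1 := bigmin_le (1:R) s (fun s => \big[Num.min/1]_(a : joint Ai) (1 - \sum_s' P s a s')).
have h2 := bigmin_le (1:R) a (fun a => 1 - \sum_s' P s a s').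
simpl in h1, h2; lra.
Qed.

Definition Mof (p : profile R S Ai) : S -> S -> R :=
  fun s s' => \sum_(a : joint Ai) jprob p s a * P s a s'.
Definition cof (r : S -> joint Ai -> R) (p : profile R S Ai) (s : S) : R :=
  \sum_(a : joint Ai) jprob p s a * r s a.

Lemma value_occ r rho p : geo_bd (Mof p) rho ->
  value r rho P p = \sum_s occ (Mof p) rho s * cof r p s.
Proof. move=> hg; rewrite -(occ_val _ hg); reflexivity. Qed.

Lemma kern_row (al : joint Ai -> R) s :
  \sum_s' `|\sum_a al a * P s a s'| <= (1 - zt) * \sum_a `|al a|.
Proof.
apply: (@le_trans _ _ (\sum_s' \sum_a `|al a| * P s a s')).
  apply: ler_sum => s' _; apply: (le_trans (ler_norm_sum _ _ _)).
  by apply: ler_sum => a _; rewrite normrM (ger0_norm (hP _ _ _)).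
rewrite exchange_big /= mulr_sumr; apply: ler_sum => a _.
by rewrite -mulr_sumr mulrC; apply: ler_wpM2r => //; apply: zeta_P.
Qed.

Lemma policy_sum1 (p : profile R S Ai) : is_policy p -> forall s, \sum_a jprob p s a = 1.
Proof.
case=> p0 p1 s; rewrite /jprob (sum_prod_joint (fun i c => p i s c)).
by rewrite big1 // => i _; apply: p1.
Qed.

Lemma policy_ge0 (p : profile R S Ai) : is_policy p -> forall s a, 0 <= jprob p s a.
Proof. by case=> p0 p1 s a; apply: prodr_ge0 => i _; apply: p0. Qed.

Lemma policy_l1 (p : profile R S Ai) : is_policy p -> forall s, \sum_a `|jprob p s a| = 1.
Proof.
move=> hp s; rewrite -(policy_sum1 hp s); apply: eq_bigr => a _.
by rewrite ger0_norm //; apply: policy_ge0.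
Qed.

Lemma policy_row (p : profile R S Ai) : is_policy p ->
  forall s, \sum_s' `|Mof p s s'| <= 1 - zt.
Proof.
move=> hp s; apply: (le_trans (kern_row _ _)).
by rewrite policy_l1 // mulr1.
Qed.


Definition ind_prof (p : profile R S Ai) (i0 : I) (b : 'I_(Ai i0)) (s : S) :
  forall i, 'I_(Ai i) -> R :=
  fun i c => if i == i0 then (val c == val b)%:R else p i s c.
Arguments ind_prof p {i0} b s i c.
Definition mq (p : profile R S Ai) (i0 : I) (b : 'I_(Ai i0)) (s : S) (a : joint Ai) : R :=
  \prod_(i : I) ind_prof p b s i (a i).

Lemma jprob_pert (p : profile R S Ai) i0 (s0 : S) (b : 'I_(Ai i0)) t s a :
  jprob (pert p s0 b t) s a = jprob p s a + t * ((s == s0)%:R * mq p b s a).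
Proof.
rewrite /jprob /mq.
rewrite [\prod_i pert p s0 b t s (a i)](bigD1 i0) //=.
rewrite [\prod_i p i s (a i)](bigD1 i0) //=.
rewrite [\prod_i ind_prof p b s i (a i)](bigD1 i0) //=.
have E1 : \prod_(j | j != i0) pert p s0 b t s (a j) = \prod_(j | j != i0) p j s (a j).
  by apply: eq_bigr => j /negbTE hj; rewrite /pert hj /= addr0.
have E2 : \prod_(j | j != i0) ind_prof p b s j (a j) = \prod_(j | j != i0) p j s (a j).
  by apply: eq_bigr => j /negbTE hj; rewrite /ind_prof hj.
rewrite E1 E2 /pert /ind_prof eqxx /=.
case: (s == s0); case: (val (a i0) == val b) => /=; ring.
Qed.

Lemma ind_l1 (p : profile R S Ai) (hp : is_policy p) i0 (b : 'I_(Ai i0)) s i :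
  \sum_c `|ind_prof p b s i c| = 1.
Proof.
rewrite /ind_prof; case: eqP => [e|_].
  subst i; rewrite (bigD1 b) //= eqxx normr1 big1 ?addr0 // => c hc.
  by move: hc; rewrite -val_eqE => /negbTE ->; rewrite normr0.
case: hp => p0 p1; rewrite -(p1 i s); apply: eq_bigr => c _.
by rewrite ger0_norm.
Qed.

Lemma mq_l1 (p : profile R S Ai) (hp : is_policy p) i0 (b : 'I_(Ai i0)) s :
  \sum_a `|mq p b s a| = 1.
Proof.
rewrite /mq; under eq_bigr do rewrite normr_prod.
rewrite (sum_prod_joint (fun i c => `|ind_prof p b s i c|)).
by rewrite big1 // => i _; apply: ind_l1.
Qed.

Definition mM (p : profile R S Ai) i0 (b : 'I_(Ai i0)) s s' :=
  \sum_a mq p b s a * P s a s'.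

Lemma Mof_pert (p : profile R S Ai) i0 (s0 : S) (b : 'I_(Ai i0)) t s s' :
  Mof (pert p s0 b t) s s' = Mof p s s' + t * ((s == s0)%:R * mM p b s s').
Proof.
rewrite /Mof /mM; under eq_bigr do rewrite jprob_pert mulrDl.
rewrite big_split /=; congr (_ + _).
rewrite !mulr_sumr; apply: eq_bigr => a _; ring.
Qed.

Lemma cof_pert r (p : profile R S Ai) i0 (s0 : S) (b : 'I_(Ai i0)) t s :
  cof r (pert p s0 b t) s = cof r p s + t * ((s == s0)%:R * \sum_a mq p b s a * r s a).
Proof.
rewrite /cof; under eq_bigr do rewrite jprob_pert mulrDl.
rewrite big_split /=; congr (_ + _).
rewrite !mulr_sumr; apply: eq_bigr => a _; ring.
Qed.

Lemma pert_l1 (p : profile R S Ai) (hp : is_policy p) i0 (s0 : S) (b : 'I_(Ai i0)) t s :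
  \sum_a `|jprob (pert p s0 b t) s a| <= 1 + `|t|.
Proof.
rewrite -(policy_l1 hp s).
apply: (@le_trans _ _ (\sum_a (`|jprob p s a| + `|t| * `|mq p b s a|))).
  apply: ler_sum => a _; rewrite jprob_pert; apply: (le_trans (ler_normD _ _)).
  rewrite lerD2l normrM; apply: ler_wpM2l => //.
  rewrite normrM; case: (s == s0); rewrite ?normr1 ?normr0 ?mul1r ?mul0r //.
rewrite big_split /= -mulr_sumr mq_l1 // mulr1 //.
Qed.

Lemma pert_row (p : profile R S Ai) (hp : is_policy p) i0 (s0 : S) (b : 'I_(Ai i0)) t s :
  \sum_s' `|Mof (pert p s0 b t) s s'| <= (1 - zt) * (1 + `|t|).
Proof.
apply: (le_trans (kern_row _ _)); apply: ler_wpM2l; last exact: pert_l1.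
by rewrite subr_ge0 zeta_le1.
Qed.


Lemma sum_ind (F G : S -> R) s0 :
  \sum_s F s * ((s == s0)%:R * G s) = F s0 * G s0.
Proof.
rewrite (bigD1 s0) //= eqxx mul1r big1 ?addr0 // => s /negbTE ->.
by rewrite mul0r mulr0.
Qed.

Hypothesis hzeta : 0 < zt.

Lemma q_bound (t : R) : `|t| <= zt / 2 -> 0 <= (1 - zt) * (1 + `|t|) /\ (1 - zt) * (1 + `|t|) <= 1 - zt / 2.
Proof.
move=> ht; have z1 := zeta_le1; have n0 : 0 <= `|t| by [].
split; first by apply: mulr_ge0; lra.
have : (1 - zt) * `|t| <= zt / 2 by apply: (@le_trans _ _ (1 * `|t|)); [apply: ler_wpM2r; lra | lra].
nra.
Qed.

Lemma grad_formula (r : I -> S -> joint Ai -> R) (rho : S -> R) (p : profile R S Ai)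
  (hp : is_policy p) i0 (s0 : S) (b : 'I_(Ai i0)) :
  grad r rho P p i0 s0 b = occ (Mof p) rho s0 *
    \sum_a mq p b s0 a * (r i0 s0 a + \sum_s' P s0 a s' * occ (trK (Mof p)) (cof (r i0) p) s').
Proof.
set u := occ (trK (Mof p)) (cof (r i0) p).
set w := occ (Mof p) rho.
set ka := \sum_a _.
have z1 := zeta_le1.
have hq : 0 <= 1 - zt < 1.
  apply/andP; split.
  - by rewrite subr_ge0.
  - by rewrite ltrBlDr ltrDl.
have hu : forall s, u s = cof (r i0) p s + \sum_s' u s' * Mof p s s'.
  by move=> s; rewrite /u (occ_fix (geo_sup _ hq (policy_row hp))).
have geot : forall t, `|t| <= zt / 2 -> geo_bd (Mof (pert p s0 b t)) rho.
  move=> t ht; have [h1 h2] := q_bound ht.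
  apply: (@geo_l1 _ _ _ ((1 - zt) * (1 + `|t|))); last exact: pert_row.
  by apply/andP; split => //; lra.
pose ga s := \sum_a mq p b s a * r i0 s a.
have hka : ga s0 + \sum_s' mM p b s0 s' * u s' = ka.
  rewrite /ga /ka /mM.
  under [in RHS]eq_bigr do rewrite mulrDr.
  rewrite big_split /=; congr (_ + _).
  under eq_bigr do rewrite mulr_suml.
  rewrite exchange_big /=; apply: eq_bigr => a _; rewrite mulr_sumr.
  by apply: eq_bigr => s' _; rewrite mulrA.
have claimA : forall t, `|t| <= zt / 2 ->
    value (r i0) rho P (pert p s0 b t) =
    \sum_s rho s * u s + t * (occ (Mof (pert p s0 b t)) rho s0 * ka).
  move=> t ht; rewrite (value_occ _ (geot t ht)).
  set wt := occ (Mof (pert p s0 b t)) rho.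
  have e1 : forall s, cof (r i0) (pert p s0 b t) s =
     (u s - \sum_s' Mof (pert p s0 b t) s s' * u s') +
     t * ((s == s0)%:R * (ga s + \sum_s' mM p b s s' * u s')).
    move=> s; rewrite cof_pert.
    have -> : \sum_s' Mof (pert p s0 b t) s s' * u s' =
       \sum_s' u s' * Mof p s s' + t * ((s == s0)%:R * \sum_s' mM p b s s' * u s').
      under eq_bigr do rewrite Mof_pert mulrDl.
      rewrite big_split /=; congr (_ + _); first by apply: eq_bigr => s' _; rewrite mulrC.
      by rewrite !mulr_sumr; apply: eq_bigr => s' _; ring.
    rewrite [u s]hu /ga; ring.
  under eq_bigr do rewrite e1 mulrDr.
  rewrite big_split /= (occ_tele _ (geot t ht)).
  under eq_bigr do rewrite mulrCA.
  by rewrite -mulr_sumr sum_ind hka.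
set Cr := \sum_s `|rho s|.
have hrho : 0 <= Cr by apply: sumr_ge0.
have claimB : forall t, `|t| <= zt / 2 ->
    `|occ (Mof (pert p s0 b t)) rho s0 - w s0| <= (2 * Cr / zt ^+ 2) * `|t|.
  move=> t ht; have [h1 h2] := q_bound ht.
  set wt := occ (Mof (pert p s0 b t)) rho.
  have fixt := occ_fix (geot t ht).
  have fix0 := occ_fix (geo_l1 rho hq (policy_row hp)).
  have bwt : (zt / 2) * \sum_s `|wt s| <= Cr.
    have := fix_l1 (q := (1 - zt) * (1 + `|t|)) _ (pert_row hp s0 b t) fixt.
    move=> /(_ ltac:(lra)) H; apply: le_trans H; apply: ler_wpM2r; first exact: sumr_ge0.
    lra.
  have he : forall s', (wt s' - w s') = t * wt s0 * mM p b s0 s' +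
       \sum_s (wt s - w s) * Mof p s s'.
    move=> s'; rewrite [wt s']fixt [w s']fix0.
    under eq_bigr do rewrite Mof_pert.
    under [X in _ = _ + X]eq_bigr do rewrite mulrBl.
    rewrite sumrB.
    have -> : \sum_s wt s * (Mof p s s' + t * ((s == s0)%:R * mM p b s s')) =
        \sum_s wt s * Mof p s s' + t * wt s0 * mM p b s0 s'.
      under eq_bigr do rewrite mulrDr mulrCA.
      by rewrite big_split /= -mulr_sumr sum_ind mulrA.
    ring.
  have H := fix_l1 (q := 1 - zt) _ (policy_row hp) he.
  have Hz : \sum_s' `|t * wt s0 * mM p b s0 s'| <= `|t| * \sum_s `|wt s|.
    under eq_bigr do rewrite normrM.
    rewrite -mulr_sumr normrM -mulrA; apply: ler_wpM2l => //.
    apply: (@le_trans _ _ (`|wt s0| * 1)); last by rewrite mulr1; apply: norm_le_sum.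
    apply: ler_wpM2l => //.
    apply: (le_trans (kern_row _ _)); rewrite mq_l1 // mulr1; lra.
  have H2 : zt * \sum_s `|wt s - w s| <= `|t| * (2 * Cr / zt).
    have := H (ltW (andP hq).2); rewrite (subKr 1) => H'.
    apply: (le_trans H').
    apply: (le_trans Hz); apply: ler_wpM2l => //.
    rewrite ler_pdivlMr //; lra.
  apply: (le_trans (norm_le_sum (fun s => wt s - w s) s0)).
  rewrite -(ler_pM2l hzeta); apply: (le_trans H2).
  have -> : zt * (2 * Cr / zt ^+ 2 * `|t|) = `|t| * (2 * Cr / zt).
    by field; exact: lt0r_neq0.
  by [].
rewrite /grad /derive1; apply: cvg_lim => //.
apply/subr_cvg0.
have hz2 : 0 < zt / 2 by apply: divr_gt0.
apply: (@cvg_to_0_linear _ _ (2 * Cr / zt ^+ 2 * `|ka|) (zt / 2)) => // h /andP[h0 hk].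
have hne : h != 0 by rewrite -normr_gt0.
rewrite addr0 (claimA h (ltW hk)) (claimA 0); last by rewrite normr0 ltW.
rewrite mul0r addr0 addrAC subrr add0r.
rewrite -[h^-1 *: _]/(h^-1 * _) mulKf // -mulrBl normrM mulrAC.
apply: ler_wpM2r => //; exact: claimB (ltW hk).
Qed.

Lemma hq_lem : 0 <= 1 - zt < 1.
Proof. by have z1 := zeta_le1; apply/andP; split; [rewrite subr_ge0 | rewrite ltrBlDr ltrDl]. Qed.

Lemma l1_stepB (K : S -> S -> R) (q : R) (d : S -> R) :
  (forall s, \sum_s' `|K s s'| <= q) ->
  \sum_s' `|\sum_s d s * K s s'| <= q * \sum_s `|d s|.
Proof. exact: l1_step. Qed.

Variables (r : I -> S -> joint Ai -> R) (rho : S -> R) (i0 : I).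
Hypothesis hr : forall i s a, -1 <= r i s a <= 1.
Hypothesis hrho0 : forall s, 0 <= rho s.
Hypothesis hrho1 : \sum_s rho s = 1.

Definition wv p := occ (Mof p) rho.
Definition uv p := occ (trK (Mof p)) (cof (r i0) p).
Definition Qv p s a := r i0 s a + \sum_s' P s a s' * uv p s'.
Definition kv p (s : S) (b : 'I_(Ai i0)) := \sum_a mq p b s a * Qv p s a.

Lemma grad_wk p (hp : is_policy p) s b : grad r rho P p i0 s b = wv p s * kv p s b.
Proof. exact: grad_formula. Qed.

Lemma r_abs s a : `|r i0 s a| <= 1.
Proof. by rewrite ler_norml; have := hr i0 s a; case/andP => -> ->. Qed.

Lemma rho_l1 : \sum_s `|rho s| = 1.
Proof. by rewrite -hrho1; apply: eq_bigr => s _; rewrite ger0_norm. Qed.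

Lemma fix_w p (hp : is_policy p) s' : wv p s' = rho s' + \sum_s wv p s * Mof p s s'.
Proof. exact: (occ_fix (geo_l1 rho hq_lem (policy_row hp))). Qed.

Lemma fix_u p (hp : is_policy p) s : uv p s = cof (r i0) p s + \sum_s' uv p s' * Mof p s s'.
Proof. exact: (occ_fix (geo_sup _ hq_lem (policy_row hp))). Qed.

Lemma BW p (hp : is_policy p) : zt * \sum_s `|wv p s| <= 1.
Proof.
have := fix_l1 (ltW (andP hq_lem).2) (policy_row hp) (fix_w hp).
by rewrite (subKr 1) rho_l1.
Qed.

Lemma BU p (hp : is_policy p) s : zt * `|uv p s| <= 1.
Proof.
have := fix_sup (ltW (andP hq_lem).2) (policy_row hp) (fix_u hp) _ s.
rewrite (subKr 1); apply => s1.
rewrite /cof; apply: (le_trans (ler_norm_sum _ _ _)).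
rewrite -(policy_l1 hp s1); apply: ler_sum => a _; rewrite normrM.
by rewrite -[X in _ <= X]mulr1; apply: ler_wpM2l => //; apply: r_abs.
Qed.

Lemma sumP_abs (f : S -> R) s a :
  `|\sum_s' P s a s' * f s'| <= \sum_s' P s a s' * `|f s'|.
Proof.
apply: (le_trans (ler_norm_sum _ _ _)); apply: ler_sum => s' _.
by rewrite normrM ger0_norm.
Qed.

Lemma sumP_bd (f : S -> R) s a B : 0 <= B -> (forall s', `|f s'| <= B) ->
  `|\sum_s' P s a s' * f s'| <= (1 - zt) * B.
Proof.
move=> B0 hf; apply: (le_trans (sumP_abs _ _ _)).
apply: (@le_trans _ _ (\sum_s' P s a s' * B)).
  by apply: ler_sum => s' _; apply: ler_wpM2l.
by rewrite -mulr_suml; apply: ler_wpM2r => //; apply: zeta_P.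
Qed.

Lemma BQ p (hp : is_policy p) s a : zt * `|Qv p s a| <= 1.
Proof.
have z1 := zeta_le1.
have hz : 0 <= zt^-1 by rewrite invr_ge0 ltW.
have hu : forall s', `|uv p s'| <= zt^-1.
  by move=> s'; rewrite -(ler_pM2l hzeta) mulfV ?lt0r_neq0 //; apply: BU.
have := sumP_bd s a hz hu.
rewrite /Qv; move=> H.
have H2 := ler_normD (r i0 s a) (\sum_s' P s a s' * uv p s').
have H3 := r_abs s a.
apply: (@le_trans _ _ (zt * (1 + (1 - zt) * zt^-1))).
  apply: ler_wpM2l; first exact: ltW.
  by apply: (le_trans H2); apply: lerD.
have -> : zt * (1 + (1 - zt) * zt^-1) = 1 by field; exact: lt0r_neq0.
by [].
Qed.

Definition Ed (p p' : profile R S Ai) (s : S) := \sum_i \sum_c `|p i s c - p' i s c|.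

Lemma BD p p' (hp : is_policy p) (hp' : is_policy p') s :
  \sum_a `|jprob p s a - jprob p' s a| <= Ed p p' s.
Proof.
apply: (prod_diff_l1 (x := fun i c => p i s c) (y := fun i c => p' i s c)).
  by move=> i; case: hp => p0 p1; rewrite -(p1 i s) le_eqVlt; apply/orP; left; apply/eqP;
     apply: eq_bigr => c _; rewrite ger0_norm.
by move=> i; case: hp' => p0 p1; rewrite -(p1 i s) le_eqVlt; apply/orP; left; apply/eqP;
   apply: eq_bigr => c _; rewrite ger0_norm.
Qed.

Lemma BDm p p' (hp : is_policy p) (hp' : is_policy p') s (b : 'I_(Ai i0)) :
  \sum_a `|mq p b s a - mq p' b s a| <= Ed p p' s.
Proof.
apply: (le_trans (prod_diff_l1 (x := fun i c => ind_prof p b s i c)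
                    (y := fun i c => ind_prof p' b s i c) _ _)).
- by move=> i; rewrite ind_l1.
- by move=> i; rewrite ind_l1.
- rewrite /Ed; apply: ler_sum => i _; rewrite /ind_prof; case: (i == i0) => //.
  by apply: (@le_trans _ _ 0); [rewrite le_eqVlt; apply/orP; left; apply/eqP;
     apply: big1 => c _; rewrite subrr normr0 | apply: sumr_ge0].
Qed.

Lemma Mof_diff p p' s s' :
  Mof p s s' - Mof p' s s' = \sum_a (jprob p s a - jprob p' s a) * P s a s'.
Proof. by rewrite /Mof -sumrB; apply: eq_bigr => a _; rewrite mulrBl. Qed.

Section Two.
Variables (p p' : profile R S Ai) (hp : is_policy p) (hp' : is_policy p').
Variable (X : R).
Hypothesis hX : forall s, Ed p p' s <= X.

Lemma X_ge0 : 0 <= X.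
Proof.
have [s _|S0] := pickP S.
  by apply: le_trans (hX s); apply: sumr_ge0 => i _; apply: sumr_ge0.
by exfalso; move: hrho1; rewrite big_pred0 // => /eqP; rewrite eq_sym oner_eq0.
Qed.

Lemma BWd : zt * (zt * \sum_s `|wv p s - wv p' s|) <= (1 - zt) * X.
Proof.
have z1 := zeta_le1.
have he : forall s', wv p s' - wv p' s' =
    \sum_s wv p s * (Mof p s s' - Mof p' s s') + \sum_s (wv p s - wv p' s) * Mof p' s s'.
  move=> s'; rewrite [wv p s'](fix_w hp) [wv p' s'](fix_w hp').
  have E1 : \sum_s wv p s * (Mof p s s' - Mof p' s s') =
      \sum_s wv p s * Mof p s s' - \sum_s wv p s * Mof p' s s'.
    by rewrite -sumrB; apply: eq_bigr => s _; rewrite mulrBr.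
  have E2 : \sum_s (wv p s - wv p' s) * Mof p' s s' =
      \sum_s wv p s * Mof p' s s' - \sum_s wv p' s * Mof p' s s'.
    by rewrite -sumrB; apply: eq_bigr => s _; rewrite mulrBl.
  rewrite E1 E2; ring.
have H := fix_l1 (ltW (andP hq_lem).2) (policy_row hp') he.
rewrite (subKr 1) in H.
have hrow : forall s, \sum_s' `|Mof p s s' - Mof p' s s'| <= (1 - zt) * X.
  move=> s; under eq_bigr do rewrite Mof_diff.
  apply: (le_trans (kern_row _ _)); apply: ler_wpM2l; first by rewrite subr_ge0.
  exact: (le_trans (BD hp hp' s) (hX s)).
have H2 := l1_stepB (wv p) hrow.
have H3 := BW hp.
have x0 := X_ge0.
have h1 : 0 <= (1 - zt) * X by apply: mulr_ge0 => //; rewrite subr_ge0.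
apply: (@le_trans _ _ (zt * ((1 - zt) * X * \sum_s `|wv p s|))).
  by apply: ler_wpM2l; [exact: ltW | exact: (le_trans H H2)].
rewrite mulrCA; rewrite -[X in _ <= X]mulr1; apply: ler_wpM2l => //.
Qed.

Lemma BUd s : zt * (zt * `|uv p s - uv p' s|) <= X.
Proof.
have z1 := zeta_le1.
have he : forall s, uv p s - uv p' s =
    \sum_a (jprob p s a - jprob p' s a) * Qv p s a +
    \sum_s' (uv p s' - uv p' s') * Mof p' s s'.
  move=> s1; rewrite [uv p s1](fix_u hp) [uv p' s1](fix_u hp') /Qv /cof.
  have E1 : \sum_a (jprob p s1 a - jprob p' s1 a) * (r i0 s1 a + \sum_s' P s1 a s' * uv p s') =
      (\sum_a jprob p s1 a * r i0 s1 a - \sum_a jprob p' s1 a * r i0 s1 a) +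
      \sum_s' uv p s' * (Mof p s1 s' - Mof p' s1 s').
    under eq_bigr do rewrite mulrDr.
    rewrite big_split /=; congr (_ + _).
      by rewrite -sumrB; apply: eq_bigr => a _; rewrite mulrBl.
    under [RHS]eq_bigr do rewrite Mof_diff mulr_sumr.
    rewrite exchange_big /=; apply: eq_bigr => a _; rewrite mulr_sumr.
    by apply: eq_bigr => s' _; ring.
  have E2 : \sum_s' uv p s' * (Mof p s1 s' - Mof p' s1 s') =
      \sum_s' uv p s' * Mof p s1 s' - \sum_s' uv p s' * Mof p' s1 s'.
    by rewrite -sumrB; apply: eq_bigr => s' _; rewrite mulrBr.
  have E3 : \sum_s' (uv p s' - uv p' s') * Mof p' s1 s' =
      \sum_s' uv p s' * Mof p' s1 s' - \sum_s' uv p' s' * Mof p' s1 s'.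
    by rewrite -sumrB; apply: eq_bigr => s' _; rewrite mulrBl.
  rewrite E1 E2 E3; ring.
have hz : 0 < zt^-1 by rewrite invr_gt0.
have hzb : forall s1, `|\sum_a (jprob p s1 a - jprob p' s1 a) * Qv p s1 a| <= X / zt.
  move=> s1; apply: (le_trans (ler_norm_sum _ _ _)).
  apply: (@le_trans _ _ (\sum_a `|jprob p s1 a - jprob p' s1 a| * zt^-1)).
    apply: ler_sum => a _; rewrite normrM; apply: ler_wpM2l => //.
    by rewrite -(ler_pM2l hzeta) mulfV ?lt0r_neq0 //; apply: BQ.
  rewrite -mulr_suml; apply: ler_wpM2r; first exact: ltW.
  exact: (le_trans (BD hp hp' s1) (hX s1)).
have H := fix_sup (ltW (andP hq_lem).2) (policy_row hp') he hzb s.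
rewrite (subKr 1) in H.
have E : zt * (X / zt) = X by field; exact: lt0r_neq0.
apply: (@le_trans _ _ (zt * (X / zt))); last by rewrite E.
by apply: ler_wpM2l => //; exact: ltW.
Qed.

Lemma Bk q (hq : is_policy q) s b : zt * `|kv q s b| <= 1.
Proof.
rewrite /kv; apply: (@le_trans _ _ (zt * \sum_a `|mq q b s a| * `|Qv q s a|)).
  apply: ler_wpM2l; first exact: ltW.
  by apply: (le_trans (ler_norm_sum _ _ _)); apply: ler_sum => a _; rewrite normrM.
rewrite mulr_sumr -(mq_l1 hq b s); apply: ler_sum => a _.
rewrite mulrCA -[X in _ <= X]mulr1; apply: ler_wpM2l => //; exact: BQ.
Qed.

Lemma Bkd s b : zt * (zt * `|kv p s b - kv p' s b|) <= X.
Proof.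
have z1 := zeta_le1.
have x0 := X_ge0.
have E : kv p s b - kv p' s b = \sum_a (mq p b s a - mq p' b s a) * Qv p s a +
    \sum_a mq p' b s a * (Qv p s a - Qv p' s a).
  rewrite /kv.
  transitivity (\sum_a (mq p b s a * Qv p s a - mq p' b s a * Qv p' s a)).
    by rewrite sumrB.
  rewrite -big_split /=; apply: eq_bigr => a _; ring.
have hQd : forall a, zt * (zt * `|Qv p s a - Qv p' s a|) <= (1 - zt) * X.
  move=> a.
  have -> : Qv p s a - Qv p' s a = \sum_s' P s a s' * (uv p s' - uv p' s').
    rewrite /Qv opprD addrACA subrr add0r -sumrB; apply: eq_bigr => s' _; by rewrite mulrBr.
  have hz2 : 0 < zt * zt by apply: mulr_gt0.
  have hb : forall s', `|uv p s' - uv p' s'| <= X / (zt * zt).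
    move=> s'; rewrite ler_pdivlMr // mulrC -mulrA; exact: BUd.
  have := sumP_bd s a (divr_ge0 x0 (ltW hz2)) hb.
  move=> H; rewrite mulrA; apply: (@le_trans _ _ (zt * zt * ((1 - zt) * (X / (zt * zt))))).
    by apply: ler_wpM2l => //; exact: ltW.
  by rewrite le_eqVlt; apply/orP; left; apply/eqP; field; exact: lt0r_neq0.
rewrite E; apply: (@le_trans _ _ (zt * (zt * (\sum_a `|mq p b s a - mq p' b s a| * `|Qv p s a|
    + \sum_a `|mq p' b s a| * `|Qv p s a - Qv p' s a|)))).
  apply: ler_wpM2l; first exact: ltW.
  apply: ler_wpM2l; first exact: ltW.
  apply: (le_trans (ler_normD _ _)); apply: lerD;
    by apply: (le_trans (ler_norm_sum _ _ _)); apply: ler_sum => a _; rewrite normrM.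
have A1 : zt * \sum_a `|mq p b s a - mq p' b s a| * `|Qv p s a| <= X.
  apply: le_trans (le_trans (BDm hp hp' s b) (hX s)).
  rewrite mulr_sumr; apply: ler_sum => a _.
  rewrite mulrCA -[X in _ <= X]mulr1; apply: ler_wpM2l => //; exact: BQ.
have A2 : zt * (zt * \sum_a `|mq p' b s a| * `|Qv p s a - Qv p' s a|) <= (1 - zt) * X.
  apply: (@le_trans _ _ (\sum_a `|mq p' b s a| * ((1 - zt) * X))); last first.
    by rewrite -mulr_suml mq_l1 // mul1r.
  rewrite !mulr_sumr; apply: ler_sum => a _.
  rewrite (_ : zt * (zt * (`|mq p' b s a| * `|Qv p s a - Qv p' s a|)) =
     `|mq p' b s a| * (zt * (zt * `|Qv p s a - Qv p' s a|))); last by ring.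
  by apply: ler_wpM2l => //; exact: hQd.
have hz0 := ltW hzeta.
have : zt * (zt * \sum_a `|mq p b s a - mq p' b s a| * `|Qv p s a|) <= zt * X.
  by apply: ler_wpM2l.
move=> A3.
rewrite mulrDr mulrDr; apply: (le_trans (lerD A3 A2)).
by rewrite mulrBl mul1r; lra.
Qed.

Definition mG s := zt * zt * `|wv p s - wv p' s| + zt * `|wv p' s| * X.

Lemma BG s b : zt ^+ 3 * `|wv p s * kv p s b - wv p' s * kv p' s b| <= mG s.
Proof.
have x0 := X_ge0; have hz0 := ltW hzeta.
have E : wv p s * kv p s b - wv p' s * kv p' s b =
   (wv p s - wv p' s) * kv p s b + wv p' s * (kv p s b - kv p' s b) by ring.
rewrite E; apply: (@le_trans _ _ (zt ^+ 3 * (`|wv p s - wv p' s| * `|kv p s b| +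
     `|wv p' s| * `|kv p s b - kv p' s b|))).
  apply: ler_wpM2l; first exact: exprn_ge0.
  by apply: (le_trans (ler_normD _ _)); rewrite !normrM.
rewrite mulrDr /mG; apply: lerD.
  have := Bk hp s b; move=> H.
  have -> : zt ^+ 3 * (`|wv p s - wv p' s| * `|kv p s b|) =
     zt * zt * `|wv p s - wv p' s| * (zt * `|kv p s b|) by rewrite !exprS expr0; ring.
  rewrite -[X in _ <= X]mulr1; apply: ler_wpM2l => //.
  by apply: mulr_ge0 => //; apply: mulr_ge0.
have := Bkd s b; move=> H.
have -> : zt ^+ 3 * (`|wv p' s| * `|kv p s b - kv p' s b|) =
   zt * `|wv p' s| * (zt * (zt * `|kv p s b - kv p' s b|)) by rewrite !exprS expr0; ring.
by apply: ler_wpM2l => //; apply: mulr_ge0.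
Qed.

Lemma BmG : \sum_s mG s <= 3 * X.
Proof.
have x0 := X_ge0; have hz0 := ltW hzeta; have z1 := zeta_le1.
have E : \sum_s mG s = zt * zt * \sum_s `|wv p s - wv p' s| + (zt * \sum_s `|wv p' s|) * X.
  rewrite /mG big_split /=; congr (_ + _); first by rewrite mulr_sumr.
  by rewrite -mulrA mulr_suml mulr_sumr; apply: eq_bigr => s _; rewrite mulrA.
rewrite E.
have H1 := BWd; have H2 := BW hp'.
have H3 : (zt * \sum_s `|wv p' s|) * X <= X.
  by have := ler_wpM2r x0 H2; rewrite mul1r.
rewrite mulrA in H1.
have H4 : (1 - zt) * X <= X.
  by have := ler_wpM2r x0 (_ : 1 - zt <= 1); rewrite mul1r; apply; lra.
set A := zt * zt * _ in H1 *.
set B := (zt * _) * X in H3 *.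
lra.
Qed.

Lemma mG_ge0 s : 0 <= mG s.
Proof.
have x0 := X_ge0; have hz0 := ltW hzeta.
by rewrite /mG; apply: addr_ge0; apply: mulr_ge0 => //; apply: mulr_ge0.
Qed.

Lemma Gsq : zt ^+ 6 * \sum_s \sum_(b < Ai i0)
    (grad r rho P p i0 s b - grad r rho P p' i0 s b) ^+ 2 <= (Ai i0)%:R * (3 * X) ^+ 2.
Proof.
have hz0 := ltW hzeta.
apply: (@le_trans _ _ (\sum_s \sum_(b < Ai i0) mG s ^+ 2)).
  rewrite mulr_sumr; apply: ler_sum => s _; rewrite mulr_sumr; apply: ler_sum => b _.
  rewrite !grad_wk // (_ : 6 = 3 * 2)%N // exprM -exprMn.
  apply: sq_le; rewrite normrM ger0_norm ?exprn_ge0 //; exact: BG.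
under eq_bigr do rewrite sumr_const card_ord -mulr_natl.
rewrite -mulr_sumr; apply: ler_wpM2l => //.
apply: (le_trans (sumsq_le mG_ge0)).
apply: sq_le; rewrite ger0_norm; first exact: BmG.
by apply: sumr_ge0 => s _; apply: mG_ge0.
Qed.

End Two.

End Game.

End Aux.

Theorem lemmaE8 (R : realType) (I S : finType) (Ai : I -> nat)
  (r : I -> S -> joint Ai -> R) (P : S -> joint Ai -> S -> R) (rho : S -> R)
  (hr : forall i s a, -1 <= r i s a <= 1)
  (hP : forall s a s', 0 <= P s a s')
  (hzeta : 0 < zeta P)
  (hrho0 : forall s, 0 <= rho s) (hrho1 : \sum_(s : S) rho s = 1)
  (pi pi' : profile R S Ai) (hpi : is_policy pi) (hpi' : is_policy pi') :
  (forall i : I,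
     enorm (fun s b => grad r rho P pi i s b - grad r rho P pi' i s b)
     <= 3 * Num.sqrt (Ai i)%:R / zeta P ^+ 3 *
        \sum_(j : I) Num.sqrt (Ai j)%:R * enorm (fun s b => pi j s b - pi' j s b))
  /\
  prof_norm (fun i s b => grad r rho P pi i s b - grad r rho P pi' i s b)
  <= 3 * (\sum_(i : I) Ai i)%:R / zeta P ^+ 3 *
     prof_norm (fun i s b => pi i s b - pi' i s b).
Proof.
set X := \sum_(j : I) Num.sqrt (Ai j)%:R * enorm (fun s b => pi j s b - pi' j s b).
have hX : forall s, Aux.Ed pi pi' s <= X.
  move=> s; rewrite /Aux.Ed /X; apply: ler_sum => j _.
  apply: (le_trans (Aux.l1_l2 (fun c => pi j s c - pi' j s c))).
  apply: ler_wpM2l; first exact: sqrtr_ge0.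
  rewrite /enorm ler_sqrt; last by apply: sumr_ge0 => ? _; apply: sumr_ge0 => ? _; apply: sqr_ge0.
  apply: (@Aux.le_sum_nonneg _ _ (fun s => \sum_(b < Ai j) (pi j s b - pi' j s b) ^+ 2) s).
  by move=> t; apply: sumr_ge0 => ? _; apply: sqr_ge0.
have hG := fun i => Aux.Gsq hP hzeta i hr hrho0 hrho1 hpi hpi' hX.
have x0 : 0 <= X by apply: sumr_ge0 => j _; apply: mulr_ge0; exact: sqrtr_ge0.
have hz6 : 0 < zeta P ^+ 6 by apply: exprn_gt0.
have hz3 : 0 < zeta P ^+ 3 by apply: exprn_gt0.
have hG' : forall i, \sum_s \sum_(b < Ai i)
    (grad r rho P pi i s b - grad r rho P pi' i s b) ^+ 2 <= (Ai i)%:R * (3 * X / zeta P ^+ 3) ^+ 2.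
  move=> i; rewrite -(ler_pM2l hz6); apply: (le_trans (hG i)).
  rewrite le_eqVlt; apply/orP; left; apply/eqP; field; exact: lt0r_neq0.
split.
- move=> i; rewrite /enorm.
  set c := 3 * Num.sqrt (Ai i)%:R / zeta P ^+ 3 * X.
  have c0 : 0 <= c.
    by rewrite /c; apply: mulr_ge0 => //; apply: divr_ge0; [apply: mulr_ge0 => //; exact: sqrtr_ge0 | exact: ltW].
  have E : c ^+ 2 = (Ai i)%:R * (3 * X / zeta P ^+ 3) ^+ 2.
    by rewrite /c !exprMn sqr_sqrtr ?ler0n //; ring.
  rewrite -(ger0_norm c0) -sqrtr_sqr ler_sqrt; last exact: sqr_ge0.
  by rewrite E; exact: hG'.
- rewrite /prof_norm.
  set Dsq := \sum_i \sum_s \sum_(b < Ai i) (pi i s b - pi' i s b) ^+ 2.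
  pose SA : R := \sum_(i : I) (Ai i)%:R.
  have SA0 : 0 <= SA by apply: sumr_ge0.
  have D0 : 0 <= Dsq by apply: sumr_ge0 => ? _; apply: sumr_ge0 => ? _; apply: sumr_ge0 => ? _; apply: sqr_ge0.
  have hX2 : X ^+ 2 <= SA * Dsq.
    have := Aux.cs (fun j => Num.sqrt (Ai j)%:R) (fun j => enorm (fun s b => pi j s b - pi' j s b)).
    have E1 : \sum_j Num.sqrt (Ai j)%:R ^+ 2 = SA.
      by apply: eq_bigr => t _; rewrite sqr_sqrtr // ler0n.
    have E2 : \sum_j enorm (fun s b => pi j s b - pi' j s b) ^+ 2 = Dsq.
      apply: eq_bigr => t _; rewrite /enorm sqr_sqrtr //.
      by apply: sumr_ge0 => ? _; apply: sumr_ge0 => ? _; apply: sqr_ge0.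
    rewrite E1 E2 => H.
    rewrite /X; exact: H.
  rewrite natr_sum -/SA.
  set c := 3 * SA / zeta P ^+ 3 * Num.sqrt Dsq.
  have c0 : 0 <= c.
    by rewrite /c; apply: mulr_ge0; [apply: divr_ge0 => //; [apply: mulr_ge0 | exact: ltW] | exact: sqrtr_ge0].
  rewrite -(ger0_norm c0) -sqrtr_sqr ler_sqrt; last exact: sqr_ge0.
  have hZ : \sum_i \sum_s \sum_(b < Ai i) (grad r rho P pi i s b - grad r rho P pi' i s b) ^+ 2
      <= SA * (3 * X / zeta P ^+ 3) ^+ 2.
    by rewrite /SA mulr_suml; apply: ler_sum => i _; exact: hG'.
  apply: (le_trans hZ).
  have E1 : SA * (3 * X / zeta P ^+ 3) ^+ 2 = (9 * SA / zeta P ^+ 6) * X ^+ 2.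
    by field; exact: lt0r_neq0.
  have E2 : c ^+ 2 = (9 * SA / zeta P ^+ 6) * (SA * Dsq).
    by rewrite /c !exprMn sqr_sqrtr //; field; exact: lt0r_neq0.
  rewrite E1 E2; apply: ler_wpM2l => //.
  by apply: divr_ge0; [apply: mulr_ge0 | exact: ltW].
Qed.
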